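(* Fix $l\in\mathbb N$ and $A>0$, and let $G_l$ be a random variable with distribution function $$\mathbb P\{G_l\le x\}=1-e^{-e^x}\Big(1+e^x+\cdots+\frac{(e^x)^{l-1}}{(l-1)!}\Big),\quad x\in\mathbb R.$$ Then there exists a constant $C_l=C_l(A)>0$ such that $$\mathbb P\{s+u<G_l\le s+v\}\le C_l\,(v-u)\,e^{-|s|}$$ for all $u<v$ in $[-A,A]$ and all $s\in\mathbb R$. *)

(* Defs.v *)
From HB Require Import structures.
From mathcomp Require Import all_boot all_order all_algebra.
From mathcomp Require Import all_classical all_reals all_analysis.
Set Implicit Arguments. Unset Strict Implicit. Unset Printing Implicit Defensive.
Import Order.TTheory GRing.Theory Num.Theory.
Local Open Scope ring_scope.

Definition Gdistr (R : realType) (l : nat) (x : R) : R :=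
  1 - expR (- expR x) * \sum_(k < l) (expR x) ^+ k / (k`!)%:R.

(* Main.v *)
From HB Require Import structures.
From mathcomp Require Import all_boot all_order all_algebra.
From mathcomp Require Import all_classical all_reals all_analysis.
From mathcomp Require Import ring lra zify.
Require Import Defs.
Import Order.TTheory GRing.Theory Num.Theory.
Local Open Scope ring_scope.

Section Aux.
Variable R : realType.
Implicit Types t x : R.

Definition Ssum (l : nat) t : R := \sum_(k < l) t ^+ k / (k`!)%:R.

Lemma fact_gt0R k : (0 : R) < (k`!)%:R.
Proof. by rewrite ltr0n fact_gt0. Qed.

Lemma Ssum_ge0 l t : 0 <= t -> 0 <= Ssum l t.
Proof.
move=> t0; apply: sumr_ge0 => k _; apply: divr_ge0; first exact: exprn_ge0.
exact: ltW (fact_gt0R k).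
Qed.

Lemma Ssum_mono l t1 t2 : 0 <= t1 -> t1 <= t2 -> Ssum l t1 <= Ssum l t2.
Proof.
move=> t10 t12; apply: ler_sum => k _; apply: ler_wpM2r.
  by rewrite invr_ge0 ltW // fact_gt0R.
apply: lerXn2r; rewrite ?nnegrE //; exact: le_trans t12.
Qed.

Lemma Ssum_scale l t h H : 0 <= t -> 0 <= h -> h <= H ->
  Ssum l (t * expR h) <= expR (H * l%:R) * Ssum l t.
Proof.
move=> t0 h0 hH; rewrite /Ssum mulr_sumr; apply: ler_sum => k _.
have -> : (t * expR h) ^+ k / (k`!)%:R = expR (h * k%:R) * (t ^+ k / (k`!)%:R).
  by rewrite exprMn -expRM_natr; ring.
apply: ler_wpM2r.
  by apply: divr_ge0; [exact: exprn_ge0 | exact: ltW (fact_gt0R k)].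
rewrite ler_expR; apply: ler_pM => //.
rewrite ler_nat; exact: ltnW (ltn_ord k).
Qed.

Lemma pow_le_fact m t : 0 <= t -> t ^+ m <= (m`!)%:R * expR t.
Proof.
move=> t0; case: m => [|n].
  by rewrite expr0 mul1r -expR0 ler_expR.
have := expR_ge1Dxn n t0 => H.
have H2 : t ^+ n.+1 / (n.+1`!)%:R <= expR t.
  apply: le_trans H; rewrite lerDr //.
by rewrite -ler_pdivrMl ?fact_gt0R // mulrC.
Qed.

Lemma term_bound k (A s a : R) : 0 < A -> s - A <= a -> a <= s + A ->
  expR a ^+ k.+1 * expR (- expR a) <= ((k.+2)`!)%:R * expR A * expR (- `|s|).
Proof.
move=> A0 h1 h2; set t := expR a.
have t0 : 0 < t by exact: expR_gt0.
have inv1 : expR t * expR (- t) = 1 by exact: expRxMexpNx_1.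
case: (lerP 0 s) => s0.
  rewrite ger0_norm //.
  rewrite -(ler_pM2r t0).
  have -> : t ^+ k.+1 * expR (- t) * t = t ^+ k.+2 * expR (- t).
    by rewrite [t ^+ k.+2]exprS; ring.
  apply: (@le_trans _ _ ((k.+2)`!)%:R).
    apply: le_trans (ler_wpM2r (expR_ge0 (- t)) (pow_le_fact k.+2 t (ltW t0))) _.
    by rewrite -mulrA inv1 mulr1.
  rewrite -mulrA -mulrA -[X in X <= _]mulr1; apply: ler_wpM2l; first by rewrite ler0n.
  rewrite /t -!expRD -expR0 ler_expR; lra.
rewrite ltr0_norm // opprK.
have -> : t ^+ k.+1 * expR (- t) = t * (t ^+ k * expR (- t)).
  by rewrite exprS; ring.
apply: (@le_trans _ _ ((expR A * expR s) * ((k.+2)`!)%:R)); last first.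
  by rewrite mulrC mulrA.
apply: ler_pM.
- exact: ltW.
- apply: mulr_ge0; [exact: exprn_ge0 (ltW t0) | exact: expR_ge0].
- by rewrite /t -expRD ler_expR; lra.
- apply: (@le_trans _ _ ((k`!)%:R)).
    apply: le_trans (ler_wpM2r (expR_ge0 (- t)) (pow_le_fact k t (ltW t0))) _.
    by rewrite -mulrA inv1 mulr1.
  rewrite ler_nat !factS; nia.
Qed.

Definition Mc (l : nat) : R := \sum_(k < l) ((k.+2)`!)%:R.

Lemma diff_bound l (A s u v : R) : 0 < A -> -A <= u -> u < v -> v <= A ->
  1 - expR (- expR (s + v)) * Ssum l (expR (s + v))
  - (1 - expR (- expR (s + u)) * Ssum l (expR (s + u)))
  <= expR (2 * A) * expR (2 * A * l%:R) * (expR A * Mc l) * (v - u) * expR (- `|s|).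
Proof.
move=> A0 hu huv hv.
set t1 := expR (s + u); set t2 := expR (s + v); set h := v - u.
have t10 : 0 < t1 by exact: expR_gt0.
have h0 : 0 <= h by rewrite /h; lra.
have h2A : h <= 2 * A by rewrite /h; lra.
have t2E : t2 = t1 * expR h by rewrite /t1 /t2 -expRD; congr expR; rewrite /h; ring.
set d := t2 - t1.
have d0 : 0 <= d.
  rewrite /d t2E subr_ge0 -[X in X <= _]mulr1; apply: ler_wpM2l; first exact: ltW.
  by rewrite -expR0 ler_expR.
have ed : expR (- t2) = expR (- t1) * expR (- d).
  by rewrite -expRD; congr expR; rewrite /d; ring.
set S1 := Ssum l t1; set S2 := Ssum l t2; set e1 := expR (- t1).
have e10 : 0 <= e1 by exact: expR_ge0.
have S20 : 0 <= S2 by apply: Ssum_ge0; rewrite t2E; apply: mulr_ge0; [exact: ltW | exact: expR_ge0].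
have S10 : 0 <= S1 by apply: Ssum_ge0; exact: ltW.
have S12 : S1 <= S2 by apply: Ssum_mono; [exact: ltW | rewrite /d in d0; lra].
have step1 : 1 - expR (- t2) * S2 - (1 - e1 * S1) <= e1 * d * S2.
  rewrite ed.
  have H1 : 1 - d <= expR (- d) by have := expR_ge1Dx (- d); lra.
  have H2 : (1 - d) * S2 <= expR (- d) * S2 by exact: ler_wpM2r.
  have H3 : S1 - expR (- d) * S2 <= d * S2 by lra.
  have H4 := ler_wpM2l e10 H3.
  have -> : 1 - e1 * expR (- d) * S2 - (1 - e1 * S1) = e1 * (S1 - expR (- d) * S2) by ring.
  by rewrite -mulrA.
have step2 : d <= t1 * h * expR (2 * A).
  have -> : d = t1 * (expR h - 1) by rewrite /d t2E; ring.
  rewrite -mulrA; apply: ler_wpM2l; first exact: ltW.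
  have H1 := expR_ge1Dx (- h).
  have H2 := ler_wpM2r (expR_ge0 h) H1.
  rewrite [expR (- h) * _]mulrC expRxMexpNx_1 in H2.
  have H3 : expR h <= expR (2 * A) by rewrite ler_expR.
  have H4 := ler_wpM2l h0 H3.
  have : expR h * (1 + - h) = expR h - h * expR h by ring.
  lra.
have step3 : S2 <= expR (2 * A * l%:R) * S1.
  by rewrite /S2 t2E; apply: Ssum_scale => //; exact: ltW.
have step4 : t1 * e1 * S1 <= expR A * expR (- `|s|) * Mc l.
  rewrite /S1 /Ssum /Mc mulr_sumr mulr_sumr; apply: ler_sum => k _.
  have -> : t1 * e1 * (t1 ^+ k / (k`!)%:R) = (t1 ^+ k.+1 * e1) / (k`!)%:R.
    by rewrite exprS; ring.
  rewrite ler_pdivrMr ?fact_gt0R //.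
  apply: (@le_trans _ _ ((k.+2)`!%:R * expR A * expR (- `|s|))).
    apply: term_bound => //; lra.
  have F1 : (1 : R) <= (k`!)%:R by rewrite ler1n fact_gt0.
  have F0 : 0 <= ((k.+2)`!)%:R * expR A * expR (- `|s|).
    by apply: mulr_ge0; [apply: mulr_ge0; [exact: ler0n|exact: expR_ge0]|exact: expR_ge0].
  have : ((k.+2)`!)%:R * expR A * expR (- `|s|) * 1 <= ((k.+2)`!)%:R * expR A * expR (- `|s|) * (k`!)%:R.
    exact: ler_wpM2l.
  have -> : expR A * expR (- `|s|) * ((k.+2)`!)%:R = ((k.+2)`!)%:R * expR A * expR (- `|s|) by ring.
  by rewrite mulr1.
apply: (le_trans step1).
have E2 : 0 <= expR (2 * A) := expR_ge0 _.
have El : 0 <= expR (2 * A * l%:R) := expR_ge0 _.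
apply: (@le_trans _ _ (e1 * (t1 * h * expR (2 * A)) * S2)).
  by apply: ler_wpM2r => //; apply: ler_wpM2l.
apply: (@le_trans _ _ (e1 * (t1 * h * expR (2 * A)) * (expR (2 * A * l%:R) * S1))).
  apply: ler_wpM2l => //; apply: mulr_ge0 => //; apply: mulr_ge0 => //.
  by apply: mulr_ge0 => //; exact: ltW.
have -> : e1 * (t1 * h * expR (2 * A)) * (expR (2 * A * l%:R) * S1)
   = (h * expR (2 * A) * expR (2 * A * l%:R)) * (t1 * e1 * S1) by ring.
apply: (@le_trans _ _ ((h * expR (2 * A) * expR (2 * A * l%:R)) * (expR A * expR (- `|s|) * Mc l))).
  by apply: ler_wpM2l => //; apply: mulr_ge0 => //; apply: mulr_ge0.
by rewrite le_eqVlt; apply/orP; left; apply/eqP; ring.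
Qed.


End Aux.

Local Open Scope classical_set_scope.
Local Open Scope ring_scope.

Theorem lemma2p13 (R : realType) (l : nat) (hl : (0 < l)%N) (A : R) (hA : 0 < A)
  (d : measure_display) (T : measurableType d) (P : probability T R)
  (G : {RV P >-> R})
  (hG : forall x : R, P [set w | G w <= x] = (Gdistr l x)%:E) :
  exists C : R, 0 < C /\
    forall s u v : R, -A <= u -> u < v -> v <= A ->
      (P [set w | (s + u < G w <= s + v)%R] <= (C * (v - u) * expR (- `|s|))%:E)%E.
Proof.
exists (expR (2 * A) * expR (2 * A * l%:R) * (expR A * Mc R l)); split.
  have M0 : 0 < Mc R l.
    case: l hl {hG} => // l' _; rewrite /Mc big_ord_recl.
    apply: (lt_le_trans (fact_gt0R R 2)); rewrite lerDl.
    by apply: sumr_ge0 => k _; exact: ler0n.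
  by apply: mulr_gt0; [apply: mulr_gt0|apply: mulr_gt0]; rewrite ?expR_gt0.
move=> s u v hu huv hv.
have mle x : measurable [set w | G w <= x].
  rewrite (_ : [set w | G w <= x] = G @^-1` `]-oo, x]); first exact: measurable_funPTI.
  by apply/seteqP; split => w /=; rewrite in_itv.
have -> : [set w | (s + u < G w <= s + v)%R] =
    [set w | G w <= s + v] `\` [set w | G w <= s + u].
  apply/seteqP; split => w /=.
    move=> /andP[h1 h2]; split => // h3.
    by have := lt_le_trans h1 h3; rewrite ltxx.
  move=> [h2 h1]; apply/andP; split => //.
  by rewrite ltNge; apply/negP.
have Hu : P [set w | G w <= s + u] = (Gdistr l (s + u))%:E by exact: hG.
have Hv : P [set w | G w <= s + v] = (Gdistr l (s + v))%:E by exact: hG.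
rewrite measureD //; last first.
  apply: (@le_lt_trans _ _ (Gdistr l (s + v))%:E); last exact: ltry.
  by rewrite le_eqVlt; apply/orP; left; apply/eqP; exact: Hv.
rewrite setIidr; last first.
  move=> w /= h; apply: (le_trans h); rewrite lerD2l; exact: ltW.
have -> : (P [set w | (G w <= s + v)%R] - P [set w | (G w <= s + u)%R])%E =
   ((Gdistr l (s + v))%:E - (Gdistr l (s + u))%:E)%E.
  by rewrite Hv Hu.
rewrite -EFinB lee_fin.
exact: diff_bound.
Qed.
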